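(* If $n=6$, then $\Gamma^3=\mathrm{Q}$ and $\Gamma^1\neq\Gamma^3$. For instance, $T=e+2e_{123456}$ satisfies $T\in\Gamma^3$ and $T\notin\Gamma^1$.
   Context: Let $\mathrm{C}$ be either the real Clifford algebra $C\ell_{p,q}$ with $p+q=n$, or the complex Clifford algebra $C\ell(\mathbb{C}^n)$. It has identity $e$ and generators $e_1,\dots,e_n$ satisfying $e_ae_b+e_be_a=2\eta_{ab}e$. In the real case $\eta=\mathrm{diag}(1,\dots,1,-1,\dots,-1)$ with $p$ entries $+1$ and $q$ entries $-1$. In the complex case $\eta=I_n$. For $a_1<\dots<a_k$ write $e_{a_1\dots a_k}=e_{a_1}\cdots e_{a_k}$. $\mathrm{C}^k$ is the grade-$k$ subspace, spanned by the $e_{a_1\dots a_k}$ with $k$ indices. The even subspace is $\mathrm{C}^{(0)}=\bigoplus_{k\text{ even}}\mathrm{C}^k$ and the odd subspace is $\mathrm{C}^{(1)}=\bigoplus_{k\text{ odd}}\mathrm{C}^k$. The reversion $U\mapsto\tilde U$ is the linear anti-automorphism acting on $\mathrm{C}^k$ as $(-1)^{k(k-1)/2}$. For $S\subseteq\mathrm{C}$, $S^\times$ is the set of elements of $S$ invertible in $\mathrm{C}$, and $\mathrm{C}^{\times(j)}:=(\mathrm{C}^{(j)})^\times$. $\mathrm{Z}$ is the center: $\mathrm{Z}=\mathrm{C}^0$ for $n$ even and $\mathrm{Z}=\mathrm{C}^0\oplus\mathrm{C}^n$ for $n$ odd. Define: <ul> <li>$\Gamma^k=\{T\in\mathrm{C}^\times: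 T\,\mathrm{C}^k\,T^{-1}\subseteq\mathrm{C}^k\}$;</li> <li>$\mathrm{P}:=\mathrm{Z}^\times(\mathrm{C}^{\times(0)}\cup\mathrm{C}^{\times(1)})=\{WT: W\in\mathrm{Z}^\times, T\in\mathrm{C}^{\times(0)}\cup\mathrm{C}^{\times(1)}\}$;</li> <li>$\mathrm{Q}:=\{T\in\mathrm{P}:\tilde TT\in\mathrm{Z}^\times\}$.</li> </ul> *)

(* Defs.v *)
(* Clifford algebras are built explicitly on the blade basis
   e_A, A a subset of {0,..,n-1}; an element is a finite function
   {set 'I_n} -> K giving its coordinates in the basis (e_A)_A. *)
From HB Require Import structures.
From mathcomp Require Import all_boot all_order all_algebra.
From mathcomp.reals Require Import reals.
From mathcomp.real_closed Require Import complex.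
Set Implicit Arguments. Unset Strict Implicit. Unset Printing Implicit Defensive.
Import Order.TTheory GRing.Theory Num.Theory.
Local Open Scope ring_scope.

Notation cl K n := {ffun {set 'I_n} -> K}.

Section Clifford.
Variables (K : fieldType) (n : nat) (eta : 'I_n -> K).

Local Notation cl := {ffun {set 'I_n} -> K}.

(* sign obtained when reordering e_A e_B: number of pairs (a,b), a in A,
   b in B with a > b *)
Definition blade_sign (A B : {set 'I_n}) : K :=
  (-1) ^+ #|[set ab : 'I_n * 'I_n | [&& ab.1 \in A, ab.2 \in B & (val ab.2 < val ab.1)%N]]|.

(* e_A e_B = blade_coef A B e_{A symdiff B} *)
Definition blade_coef (A B : {set 'I_n}) : K :=
  blade_sign A B * \prod_(i in A :&: B) eta i.

Definition symdiff (A B : {set 'I_n}) := (A :\: B) :|: (B :\: A).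

(* the basis blade e_A (e_{a1...ak} = e_{a1} ... e_{ak} for a1 < ... < ak) *)
Definition blade (A : {set 'I_n}) : cl := [ffun B => (B == A)%:R].

Definition cl_one : cl := blade set0.

Definition gen (i : 'I_n) : cl := blade [set i].

Definition cl_mul (x y : cl) : cl :=
  [ffun C => \sum_(A : {set 'I_n}) \sum_(B : {set 'I_n} | symdiff A B == C)
              x A * y B * blade_coef A B].

(* scalar multiplication c X (addition is the pointwise one on {ffun _ -> K}) *)
Definition cl_scale (c : K) (x : cl) : cl := [ffun A => c * x A].

Definition cl_inverse (T U : cl) : Prop := cl_mul T U = cl_one /\ cl_mul U T = cl_one.
Definition cl_invertible (T : cl) : Prop := exists U, cl_inverse T U.

Definition in_grade (k : nat) (X : cl) : Prop := forall A : {set 'I_n}, #|A| != k -> X A = 0.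
Definition in_even (X : cl) : Prop := forall A : {set 'I_n}, odd #|A| -> X A = 0.
Definition in_odd (X : cl) : Prop := forall A : {set 'I_n}, ~~ odd #|A| -> X A = 0.

(* center Z = C^0 (n even), C^0 + C^n (n odd) *)
Definition in_center (X : cl) : Prop :=
  forall A : {set 'I_n}, X A != 0 -> A = set0 \/ (odd n /\ A = setT).

Definition cl_rev (X : cl) : cl := [ffun A : {set 'I_n} => (-1) ^+ ('C(#|A|, 2)) * X A].

Definition Gamma (k : nat) (T : cl) : Prop :=
  exists U, cl_inverse T U /\ forall X, in_grade k X -> in_grade k (cl_mul (cl_mul T X) U).

Definition in_P (T : cl) : Prop :=
  exists W T', [/\ in_center W, cl_invertible W,
                   (in_even T' \/ in_odd T'), cl_invertible T' & T = cl_mul W T'].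

Definition in_Q (T : cl) : Prop :=
  in_P T /\ in_center (cl_mul (cl_rev T) T) /\ cl_invertible (cl_mul (cl_rev T) T).

End Clifford.

(* metric of Cl_{p,q}: first p generators square to +1, last q to -1 *)
Definition eta_pq (R : realType) (p q : nat) (i : 'I_(p + q)) : R :=
  if (i < p)%N then 1 else -1.

Definition eta_C (R : realType) (n : nat) (i : 'I_n) : R[i] := 1.

(* Main.v *)
Require Import Defs.
From HB Require Import structures.
From mathcomp Require Import all_boot all_order all_algebra.
From mathcomp.reals Require Import reals.
From mathcomp.real_closed Require Import complex.
From mathcomp Require Import ring.
Import Order.TTheory GRing.Theory Num.Theory.
Local Open Scope ring_scope.

Lemma in_symdiff n (A B : {set 'I_n}) x : (x \in symdiff A B) = (x \in A) (+) (x \in B).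
Proof. by rewrite !inE; case: (x \in A); case: (x \in B). Qed.

Section Sym.
Variable n : nat.
Implicit Types A B C : {set 'I_n}.
Lemma symdiffC A B : symdiff A B = symdiff B A.
Proof. by apply/setP=> x; rewrite !in_symdiff addbC. Qed.
Lemma symdiffA A B C : symdiff A (symdiff B C) = symdiff (symdiff A B) C.
Proof. by apply/setP=> x; rewrite !in_symdiff addbA. Qed.
Lemma symdiffK A B : symdiff A (symdiff A B) = B.
Proof. by apply/setP=> x; rewrite !in_symdiff addKb. Qed.
Lemma symdiffKr A B : symdiff (symdiff B A) A = B.
Proof. by apply/setP=> x; rewrite !in_symdiff addbK. Qed.
Lemma symdiff0s A : symdiff set0 A = A.
Proof. by apply/setP=> x; rewrite !in_symdiff inE. Qed.
Lemma symdiffs0 A : symdiff A set0 = A.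
Proof. by apply/setP=> x; rewrite !in_symdiff inE addbF. Qed.
Lemma symdiffvv A : symdiff A A = set0.
Proof. by apply/setP=> x; rewrite !in_symdiff inE addbb. Qed.
Lemma symdiff_inj A : injective (symdiff A).
Proof. by move=> B C E; rewrite -(symdiffK A B) E symdiffK. Qed.
Lemma symdiff_injr A : injective (fun B => symdiff B A).
Proof. by move=> B C E; rewrite -(symdiffKr A B) /= E symdiffKr. Qed.
End Sym.

Lemma signcard (K : fieldType) (T : finType) (S : {set T}) :
  (-1) ^+ #|S| = \prod_i (if i \in S then -1 else 1) :> K.
Proof. by rewrite -prodr_const big_mkcond. Qed.

Lemma sgn_sq (K : fieldType) k : (-1) ^+ k * (-1) ^+ k = 1 :> K.
Proof. by rewrite -expr2 sqrr_sign. Qed.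

Lemma bin2D m k : 'C(m + k, 2) = ('C(m, 2) + 'C(k, 2) + m * k)%N.
Proof.
elim: k => [|k IH]; first by rewrite addn0 muln0 bin0n !addn0.
by rewrite addnS !binS IH !bin1 mulnS; ring.
Qed.

Section Gen.
Variables (K : fieldType) (n : nat) (eta : 'I_n -> K).
Local Notation cl := {ffun {set 'I_n} -> K}.
Local Notation mul := (cl_mul eta).
Local Notation sgn := (@blade_sign K n).
Local Notation coef := (blade_coef eta).
Implicit Types (A B C D : {set 'I_n}) (x y z : cl).

Definition sgf A B (a b : 'I_n) : K :=
  if [&& a \in A, b \in B & (val b < val a)%N] then -1 else 1.

Lemma blade_signE A B : sgn A B = \prod_a \prod_b sgf A B a b.
Proof.
rewrite /blade_sign -prodr_const big_mkcond pair_big /=.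
by apply: eq_bigr=> -[a b] _; rewrite inE.
Qed.

Lemma sgn_addl A B C : sgn (symdiff A B) C = sgn A C * sgn B C.
Proof.
rewrite !blade_signE -big_split; apply: eq_bigr=> a _; rewrite -big_split.
apply: eq_bigr=> b _; rewrite /sgf in_symdiff.
by case: (a \in A); case: (a \in B); case: (b \in C); case: (val b < val a)%N;
  rewrite /= ?mulr1 ?mul1r ?mulrNN ?mulr1.
Qed.

Lemma sgn_addr A B C : sgn A (symdiff B C) = sgn A B * sgn A C.
Proof.
rewrite !blade_signE -big_split; apply: eq_bigr=> a _; rewrite -big_split.
apply: eq_bigr=> b _; rewrite /sgf in_symdiff.
by case: (a \in A); case: (b \in B); case: (b \in C); case: (val b < val a)%N;
  rewrite /= ?mulr1 ?mul1r ?mulrNN ?mulr1.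
Qed.

Lemma sgn_sq2 A B : sgn A B * sgn A B = 1.
Proof. exact: sgn_sq. Qed.

Lemma sgn_swap A B :
  sgn A B * sgn B A = (-1) ^+ (#|A| * #|B|) * (-1) ^+ #|A :&: B|.
Proof.
have P2 : \prod_a \prod_b (if [&& a \in A, b \in B & a == b] then -1 else 1)
   = (-1) ^+ #|A :&: B| :> K.
  rewrite signcard; apply: eq_bigr=> a _.
  rewrite (bigD1 a) //= big1 ?mulr1 => [|b /negbTE nba]; last by rewrite eq_sym nba !andbF.
  by rewrite eqxx andbT inE.
have P3 : \prod_a \prod_b (if (a \in A) && (b \in B) then -1 else 1)
   = (-1) ^+ (#|A| * #|B|) :> K.
  transitivity (\prod_a (if a \in A then (-1) ^+ #|B| else 1) : K).
    apply: eq_bigr => a _; case: (a \in A) => /=; last by rewrite big1.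
    by rewrite signcard.
  by rewrite -big_mkcond prodr_const -exprM mulnC.
have key : (sgn A B * sgn B A) * (-1) ^+ #|A :&: B| = (-1) ^+ (#|A| * #|B|).
  rewrite -P2 -P3 blade_signE [sgn B A]blade_signE [X in _ * X * _]exchange_big /=.
  rewrite -!big_split; apply: eq_bigr=> a _; rewrite -!big_split.
  apply: eq_bigr=> b _; rewrite /sgf /=.
  case: (a \in A); case: (b \in B); rewrite /= ?mulr1 ?mul1r //.
  have [lt|gt|eq] := ltngtP (val b) (val a).
  - have -> : (a == b) = false by apply/negbTE; rewrite -val_eqE /= neq_ltn lt orbT.
    by rewrite !mulr1.
  - have -> : (a == b) = false by apply/negbTE; rewrite -val_eqE /= neq_ltn gt.
    by rewrite !mul1r mulr1.
  - have -> : (a == b) by rewrite -val_eqE /= eq.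
    by rewrite !mul1r.
by rewrite -key -[RHS]mulrA sgn_sq mulr1.
Qed.

Lemma sgn0l A : sgn set0 A = 1.
Proof. by rewrite blade_signE big1 // => a _; rewrite big1 // => b _; rewrite /sgf inE. Qed.
Lemma sgn0r A : sgn A set0 = 1.
Proof. by rewrite blade_signE big1 // => a _; rewrite big1 // => b _; rewrite /sgf inE andbF. Qed.

Lemma prod_setE (S : {set 'I_n}) : \prod_(i in S) eta i = \prod_i (if i \in S then eta i else 1).
Proof. by rewrite big_mkcond. Qed.

Lemma coef0l A : coef set0 A = 1.
Proof. by rewrite /blade_coef sgn0l set0I big_set0 mulr1. Qed.
Lemma coef0r A : coef A set0 = 1.
Proof. by rewrite /blade_coef sgn0r setI0 big_set0 mulr1. Qed.

Lemma cocycle A B C :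
  coef A B * coef (symdiff A B) C = coef B C * coef A (symdiff B C).
Proof.
rewrite /blade_coef sgn_addl sgn_addr !prod_setE.
have : (\prod_i (if i \in A :&: B then eta i else 1)) *
          (\prod_i (if i \in symdiff A B :&: C then eta i else 1)) =
          (\prod_i (if i \in B :&: C then eta i else 1)) *
          (\prod_i (if i \in A :&: symdiff B C then eta i else 1)).
  rewrite -!big_split; apply: eq_bigr=> i _ /=.
  rewrite !in_setI !in_symdiff.
  by case: (i \in A); case: (i \in B); case: (i \in C); rewrite /= ?mulr1 ?mul1r.
set a := sgn A B; set b := sgn A C; set c := sgn B C.
set P := \prod_i (if i \in A :&: B then eta i else 1).
set Q := \prod_i (if i \in symdiff A B :&: C then eta i else 1).
set R := \prod_i (if i \in B :&: C then eta i else 1).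
set S := \prod_i (if i \in A :&: symdiff B C then eta i else 1).
move=> E.
transitivity (a * b * c * (P * Q)); first by ring.
by rewrite E; ring.
Qed.

Lemma mulE x y C :
  mul x y C = \sum_A x A * y (symdiff A C) * coef A (symdiff A C).
Proof.
rewrite ffunE; apply: eq_bigr=> A _.
rewrite (big_pred1 (symdiff A C)) // => B /=.
by apply/eqP/eqP=> [<-|->]; rewrite symdiffK.
Qed.

Lemma mulA x y z : mul x (mul y z) = mul (mul x y) z.
Proof.
apply/ffunP=> D; rewrite !mulE.
under [RHS]eq_bigr => E _ do rewrite mulE !mulr_suml.
rewrite exchange_big /=; apply: eq_bigr=> A _.
rewrite mulE mulr_sumr mulr_suml [RHS](reindex_inj (@symdiff_inj n A)) /=.
apply: eq_bigr=> B _; rewrite symdiffK.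
have E1 : symdiff (symdiff A B) D = symdiff B (symdiff A D).
  by rewrite -symdiffA [symdiff A _]symdiffA [symdiff A B]symdiffC -symdiffA.
have := cocycle A B (symdiff B (symdiff A D)); rewrite symdiffK => H.
rewrite E1.
set c1 := coef B _; set c2 := coef A (symdiff A D).
set c3 := coef A B; set c4 := coef (symdiff A B) _.
move: H; rewrite -/c1 -/c2 -/c3 -/c4 => H.
transitivity (x A * y B * z (symdiff B (symdiff A D)) * (c1 * c2)); first by ring.
by rewrite -H; ring.
Qed.

Lemma mul_bladel B x C :
  mul (blade K B) x C = coef B (symdiff B C) * x (symdiff B C).
Proof.
rewrite mulE (bigD1 B) //= big1 => [|A nAB]; last by rewrite ffunE (negbTE nAB) !mul0r.
by rewrite ffunE eqxx mul1r addr0 mulrC.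
Qed.

Lemma mul_blader x B C :
  mul x (blade K B) C = x (symdiff C B) * coef (symdiff C B) B.
Proof.
rewrite mulE (bigD1 (symdiff C B)) //= big1 => [|A nAB].
  have E : symdiff (symdiff C B) C = B by rewrite symdiffC symdiffK.
  by rewrite E ffunE eqxx mulr1 addr0.
rewrite ffunE; case: eqP => [E|]; last by rewrite mulr0 mul0r.
by move: nAB; rewrite -E [symdiff C _]symdiffC symdiffKr eqxx.
Qed.

Lemma blade_mul A B :
  mul (blade K A) (blade K B) = cl_scale (coef A B) (blade K (symdiff A B)).
Proof.
apply/ffunP=> C; rewrite mul_bladel !ffunE.
have -> : (symdiff A C == B) = (C == symdiff A B).
  by apply/eqP/eqP=> [<-|->]; rewrite symdiffK.
by case: eqP=> [->|]; rewrite ?symdiffK ?mulr1 ?mulr0.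
Qed.

Lemma mul1x x : mul (cl_one K n) x = x.
Proof. by apply/ffunP=> C; rewrite mul_bladel symdiff0s coef0l mul1r. Qed.
Lemma mulx1 x : mul x (cl_one K n) = x.
Proof. by apply/ffunP=> C; rewrite mul_blader symdiffs0 coef0r mulr1. Qed.

Lemma mulZl c x y : mul (cl_scale c x) y = cl_scale c (mul x y).
Proof.
apply/ffunP=> C; rewrite mulE [RHS]ffunE mulE mulr_sumr.
by apply: eq_bigr=> A _; rewrite ffunE !mulrA.
Qed.
Lemma mulZr c x y : mul x (cl_scale c y) = cl_scale c (mul x y).
Proof.
apply/ffunP=> C; rewrite mulE [RHS]ffunE mulE mulr_sumr.
by apply: eq_bigr=> A _; rewrite ffunE; ring.
Qed.
Lemma mulDl x y z : mul (x + y) z = mul x z + mul y z.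
Proof.
apply/ffunP=> C; rewrite mulE [RHS]ffunE !mulE -big_split.
by apply: eq_bigr=> A _; rewrite ffunE !mulrDl.
Qed.
Lemma mulDr x y z : mul x (y + z) = mul x y + mul x z.
Proof.
apply/ffunP=> C; rewrite mulE [RHS]ffunE !mulE -big_split.
by apply: eq_bigr=> A _; rewrite ffunE mulrDr mulrDl.
Qed.
Lemma scaleA c d x : cl_scale c (cl_scale d x) = cl_scale (c * d) x.
Proof. by apply/ffunP=> A; rewrite !ffunE mulrA. Qed.
Lemma scale1 x : cl_scale 1 x = x.
Proof. by apply/ffunP=> A; rewrite !ffunE mul1r. Qed.

Lemma sign_symdiff A B :
  (-1) ^+ #|symdiff A B| = (-1) ^+ #|A| * (-1) ^+ #|B| :> K.
Proof.
rewrite !signcard -big_split; apply: eq_bigr=> i _ /=; rewrite in_symdiff.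
by case: (i \in A); case: (i \in B); rewrite /= ?mulr1 ?mul1r ?mulrNN ?mulr1.
Qed.

Definition alpha x : cl := [ffun A : {set 'I_n} => (-1) ^+ #|A| * x A].

Lemma alphaM x y : alpha (mul x y) = mul (alpha x) (alpha y).
Proof.
apply/ffunP=> C; rewrite ffunE !mulE mulr_sumr; apply: eq_bigr=> A _.
rewrite !ffunE sign_symdiff.
set sA := (-1) ^+ #|A|; set sC := (-1) ^+ #|C|.
transitivity ((sA * sA) * (sC * (x A * y (symdiff A C) * coef A (symdiff A C)))).
  by rewrite /sA sgn_sq mul1r.
by ring.
Qed.

Lemma alphaK x : alpha (alpha x) = x.
Proof. by apply/ffunP=> A; rewrite !ffunE mulrA sgn_sq mul1r. Qed.
Lemma alphaZ c x : alpha (cl_scale c x) = cl_scale c (alpha x).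
Proof. by apply/ffunP=> A; rewrite !ffunE; ring. Qed.
Lemma alpha1 : alpha (cl_one K n) = cl_one K n.
Proof.
apply/ffunP=> A; rewrite !ffunE; case: eqP=> [->|]; last by rewrite mulr0.
by rewrite cards0 expr0 mul1r.
Qed.

Lemma binpar a b k :
  odd 'C(a + b, 2) = odd ('C(a + k, 2) + 'C(b + k, 2) + (a + k) * (b + k) + k).
Proof.
rewrite !bin2D !oddD !oddM !oddD.
by case: (odd a); case: (odd b); case: (odd k); case: (odd 'C(a, 2));
  case: (odd 'C(b, 2)); case: (odd 'C(k, 2)).
Qed.

Lemma sgn_flip A B :
  sgn B A = sgn A B * ((-1) ^+ (#|A| * #|B|) * (-1) ^+ #|A :&: B|).
Proof. by rewrite -sgn_swap mulrA sgn_sq mul1r. Qed.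

Lemma rev_coef A B :
  (-1) ^+ 'C(#|symdiff A B|, 2) * coef A B =
  (-1) ^+ 'C(#|A|, 2) * (-1) ^+ 'C(#|B|, 2) * coef B A :> K.
Proof.
rewrite /blade_coef [sgn B A]sgn_flip [B :&: A]setIC.
have cA : #|A| = (#|A :\: B| + #|A :&: B|)%N by rewrite addnC cardsID.
have cB : #|B| = (#|B :\: A| + #|A :&: B|)%N by rewrite addnC setIC cardsID.
have cS : #|symdiff A B| = (#|A :\: B| + #|B :\: A|)%N.
  rewrite -cardsUI.
  have -> : (A :\: B) :&: (B :\: A) = set0.
    by apply/setP=> i; rewrite !inE; case: (i \in A); case: (i \in B); rewrite ?andbF.
  by rewrite cards0 addn0.
have E : (-1) ^+ 'C(#|symdiff A B|, 2) =
   (-1) ^+ 'C(#|A|, 2) * (-1) ^+ 'C(#|B|, 2) *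
   ((-1) ^+ (#|A| * #|B|) * (-1) ^+ #|A :&: B|) :> K.
  have P : odd 'C(#|symdiff A B|, 2) =
      odd ('C(#|A|, 2) + 'C(#|B|, 2) + (#|A| * #|B| + #|A :&: B|)).
    by rewrite cS cA cB (binpar _ _ #|A :&: B|) !addnA.
  by rewrite -[LHS]signr_odd P signr_odd !exprD.
rewrite E.
set u := (-1) ^+ 'C(#|A|, 2); set v := (-1) ^+ 'C(#|B|, 2).
set w := (-1) ^+ (#|A| * #|B|) * (-1) ^+ #|A :&: B|.
by ring.
Qed.

Lemma revM x y : cl_rev (mul x y) = mul (cl_rev y) (cl_rev x).
Proof.
apply/ffunP=> C; rewrite ffunE !mulE mulr_sumr.
rewrite [RHS](reindex_inj (@symdiff_injr n C)) /=.
apply: eq_bigr=> A _; rewrite !ffunE symdiffKr.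
have := rev_coef A (symdiff A C); rewrite symdiffK => H.
set rC := (-1) ^+ 'C(#|C|, 2); set rA := (-1) ^+ 'C(#|A|, 2).
set rB := (-1) ^+ 'C(#|symdiff A C|, 2).
move: H; rewrite -/rC -/rA -/rB => H.
transitivity (x A * y (symdiff A C) * (rC * coef A (symdiff A C))); first by ring.
by rewrite H; ring.
Qed.

Lemma revK x : cl_rev (cl_rev x) = x.
Proof. by apply/ffunP=> A; rewrite !ffunE mulrA sgn_sq mul1r. Qed.
Lemma revZ c x : cl_rev (cl_scale c x) = cl_scale c (cl_rev x).
Proof. by apply/ffunP=> A; rewrite !ffunE; ring. Qed.
Lemma rev1 : cl_rev (cl_one K n) = cl_one K n.
Proof.
apply/ffunP=> A; rewrite !ffunE; case: eqP=> [->|]; last by rewrite mulr0.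
by rewrite cards0 bin0n expr0 mul1r.
Qed.

Lemma coef_anti A B : odd (#|A| * #|B| + #|A :&: B|) -> coef B A = - coef A B.
Proof.
move=> H; rewrite /blade_coef sgn_flip -exprD -signr_odd H expr1 setIC.
by rewrite mulrN1 mulNr.
Qed.

Lemma coef_neq0 A B : (forall i, eta i != 0) -> coef A B != 0.
Proof.
move=> he; rewrite /blade_coef mulf_neq0 ?signr_eq0 //.
by apply/prodf_neq0=> i _.
Qed.

End Gen.

Notation o k := (@Ordinal 6 k isT).

Lemma three_blades (i : 'I_6) : exists B1 B2 B3 : {set 'I_6},
  [/\ #|B1| = 3%N, #|B2| = 3%N, #|B3| = 3%N & symdiff (symdiff B1 B2) B3 = [set i]].
Proof.
have S : forall a b c : 'I_6, a != b -> a != c -> b != c -> #|[set a; b; c]| = 3%N.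
  by move=> a b c ab ac bc; rewrite -setUA cardsU1 cards2 !inE negb_or ab ac bc.
case: i => [[|[|[|[|[|[|//]]]]]] Hi].
- exists [set o 0; o 1; o 2], [set o 2; o 3; o 4], [set o 1; o 3; o 4].
  split; try by apply: S.
  by apply/setP=> x; rewrite !in_symdiff !inE; case: x; do 6?case=> //.
- exists [set o 1; o 2; o 3], [set o 3; o 4; o 5], [set o 2; o 4; o 5].
  split; try by apply: S.
  by apply/setP=> x; rewrite !in_symdiff !inE; case: x; do 6?case=> //.
- exists [set o 2; o 3; o 4], [set o 4; o 5; o 0], [set o 3; o 5; o 0].
  split; try by apply: S.
  by apply/setP=> x; rewrite !in_symdiff !inE; case: x; do 6?case=> //.
- exists [set o 3; o 4; o 5], [set o 5; o 0; o 1], [set o 4; o 0; o 1].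
  split; try by apply: S.
  by apply/setP=> x; rewrite !in_symdiff !inE; case: x; do 6?case=> //.
- exists [set o 4; o 5; o 0], [set o 0; o 1; o 2], [set o 5; o 1; o 2].
  split; try by apply: S.
  by apply/setP=> x; rewrite !in_symdiff !inE; case: x; do 6?case=> //.
- exists [set o 5; o 0; o 1], [set o 1; o 2; o 3], [set o 0; o 2; o 3].
  split; try by apply: S.
  by apply/setP=> x; rewrite !in_symdiff !inE; case: x; do 6?case=> //.
Qed.

Section Six.
Variables (K : fieldType) (eta : 'I_6 -> K).
Hypothesis he : forall i, eta i != 0.
Hypothesis h2 : (2%:R : K) != 0.
Local Notation cl := {ffun {set 'I_6} -> K}.
Local Notation mul := (cl_mul eta).
Local Notation coef := (blade_coef eta).
Local Notation one := (cl_one K 6).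
Local Notation alpha := (@alpha K 6).
Definition sc (c : K) : cl := cl_scale c one.
Implicit Types (A B C : {set 'I_6}) (x y z T U X Z : cl).

Definition commutes x y := mul x y = mul y x.

Lemma commM Z a b : commutes Z a -> commutes Z b -> commutes Z (mul a b).
Proof.
move=> ha hb; rewrite /commutes mulA ha -mulA hb mulA //.
Qed.

Lemma scale_inj c x y : c != 0 -> cl_scale c x = cl_scale c y -> x = y.
Proof.
move=> c0 E; rewrite -[x]scale1 -[y]scale1 -(mulVf c0) -!scaleA E //.
Qed.

Lemma self_neg (a : K) : a = - a -> a = 0.
Proof.
move=> E; have : a *+ 2 = 0 by rewrite mulr2n {1}E addNr.
by rewrite -mulr_natl => /eqP; rewrite mulf_eq0 (negbTE h2) => /eqP.
Qed.

Lemma grade_blade B : #|B| = 3%N -> in_grade 3 (blade K B).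
Proof.
move=> cB A nA; rewrite ffunE; case: eqP=> // EA.
by move: nA; rewrite EA cB eqxx.
Qed.

Lemma comm_gen Z : (forall X, in_grade 3 X -> commutes Z X) ->
  forall i, commutes Z (gen K i).
Proof.
move=> H i; have [B1 [B2 [B3 [c1 c2 c3 E]]]] := three_blades i.
have hP : commutes Z (mul (mul (blade K B1) (blade K B2)) (blade K B3)).
  by apply: commM; [apply: commM|]; apply: H; apply: grade_blade.
move: hP; rewrite blade_mul mulZl blade_mul E /commutes !mulZr !mulZl !scaleA => EE.
apply: scale_inj EE; exact/mulf_neq0/coef_neq0/he/coef_neq0/he.
Qed.

Lemma central_gen Z : (forall i, commutes Z (gen K i)) -> Z = sc (Z set0).
Proof.
move=> H; apply/ffunP=> A; rewrite !ffunE.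
have [->|nA] := eqP; first by rewrite mulr1.
rewrite mulr0.
have key : forall i, odd (#|A| * #|[set i]| + #|A :&: [set i]|) -> Z A = 0.
  move=> i odd1.
  move: (H i); rewrite /commutes => Hi.
  have := congr1 (fun f : cl => f (symdiff [set i] A)) Hi.
  have E1 : symdiff (symdiff [set i] A) [set i] = A by rewrite symdiffC symdiffK.
  rewrite /gen mul_blader mul_bladel E1 symdiffK.
  rewrite (@coef_anti _ _ eta _ _ odd1) => E.
  have : Z A * coef A [set i] = 0.
    by apply: self_neg; rewrite {1}E mulNr mulrC.
  by move/eqP; rewrite mulf_eq0 (negbTE (@coef_neq0 _ _ eta A [set i] he)) orbF => /eqP.
case: (boolP (odd #|A|)) => oA.
  case: (pickP (fun i => i \notin A)) => [i /= iA|allA].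
    apply: (key i); rewrite cards1 muln1.
    have -> : A :&: [set i] = set0.
      by apply/setP=> j; rewrite !inE; case: eqP => [->|]; rewrite ?(negbTE iA) ?andbF.
    by rewrite cards0 addn0.
  have : A = setT by apply/setP=> j; rewrite inE; move: (allA j) => /= /negbFE.
  by move=> EA; move: oA; rewrite EA cardsT card_ord.
have [i iA] : exists i, i \in A by apply/set0Pn; apply/eqP.
apply: (key i); rewrite cards1 muln1.
have -> : A :&: [set i] = [set i].
  by apply/setP=> j; rewrite !inE; case: eqP => [->|]; rewrite ?iA ?andbF.
by rewrite cards1 addn1 /= oA.
Qed.

Lemma central3 Z : (forall X, in_grade 3 X -> commutes Z X) -> Z = sc (Z set0).
Proof. by move=> H; apply: central_gen; apply: comm_gen. Qed.

Lemma sc_comp c A : sc c A = c * (A == set0)%:R.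
Proof. by rewrite !ffunE. Qed.

Lemma center_sc X : in_center X -> X = sc (X set0).
Proof.
move=> H; apply/ffunP=> A; rewrite sc_comp.
have [->|nA] := eqP; first by rewrite mulr1.
rewrite mulr0; apply/eqP; apply: contraT => XA.
by case: (H A XA) => // -[].
Qed.

Lemma sc_center c : in_center (sc c).
Proof.
move=> A; rewrite sc_comp; case: (A =P set0) => [->|_]; first by left.
by rewrite mulr0 eqxx.
Qed.

Lemma mul_scl c x : mul (sc c) x = cl_scale c x.
Proof. by rewrite mulZl mul1x. Qed.
Lemma mul_scr c x : mul x (sc c) = cl_scale c x.
Proof. by rewrite mulZr mulx1. Qed.

Lemma one_neq0 : one != 0.
Proof.
apply/eqP=> /(congr1 (fun f : cl => f set0)); rewrite !ffunE eqxx.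
by move/eqP; rewrite oner_eq0.
Qed.

Lemma mul0x x : mul 0 x = 0.
Proof.
apply/ffunP=> C; rewrite mulE ffunE big1 // => A _; rewrite ffunE !mul0r //.
Qed.
Lemma mulx0 x : mul x 0 = 0.
Proof.
apply/ffunP=> C; rewrite mulE ffunE big1 // => A _; rewrite ffunE mulr0 mul0r //.
Qed.

Lemma inv_sc_neq0 c : cl_invertible eta (sc c) -> c != 0.
Proof.
case=> V [H _]; apply/eqP=> c0; move: H; rewrite mul_scl c0.
have -> : cl_scale 0 V = 0 by apply/ffunP=> A; rewrite !ffunE mul0r.
by move=> E; move: one_neq0; rewrite -E eqxx.
Qed.

Lemma sc_inv c : c != 0 -> cl_inverse eta (sc c) (sc c^-1).
Proof.
by move=> c0; rewrite /cl_inverse !mul_scl /sc !scaleA mulVf ?mulfV ?scale1.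
Qed.

Lemma inv_unique T U V : mul U T = one -> mul T V = one -> U = V.
Proof. by move=> UT TV; rewrite -[U](mulx1 K 6 eta) -TV mulA UT mul1x. Qed.

Lemma grade3_signs X : in_grade 3 X ->
  alpha X = cl_scale (-1) X /\ cl_rev X = cl_scale (-1) X.
Proof.
move=> H; split; apply/ffunP=> A; rewrite !ffunE; have [cA|nA] := eqVneq #|A| 3%N;
  try by rewrite (H A nA) !mulr0.
- by rewrite cA -signr_odd /= expr1.
- by rewrite cA -signr_odd /= expr1.
Qed.

Lemma signs_grade3 X : alpha X = cl_scale (-1) X -> cl_rev X = cl_scale (-1) X ->
  in_grade 3 X.
Proof.
move=> Ha Hr A nA.
have := congr1 (fun f : cl => f A) Ha; have := congr1 (fun f : cl => f A) Hr.
rewrite !ffunE -signr_odd -[(-1) ^+ #|A|]signr_odd => r a.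
have Hk : (#|A| <= 6)%N by have := max_card (mem A); rewrite card_ord.
have : odd #|A| = false \/ odd 'C(#|A|, 2) = false.
  move: nA Hk; case: #|A| => [|[|[|[|[|[|[|k]]]]]]] //= _ _; by [left|right].
case=> E; [move: a|move: r]; rewrite E expr0 mul1r mulN1r; exact: self_neg.
Qed.

Lemma alpha_rev x : alpha (cl_rev x) = cl_rev (alpha x).
Proof. by apply/ffunP=> A; rewrite !ffunE; ring. Qed.

Lemma scale_mulN c x : cl_scale (-1) (cl_scale c x) = cl_scale (- c) x.
Proof. by rewrite scaleA mulN1r. Qed.

Lemma Q_Gamma3 T : in_Q eta T -> Gamma eta 3 T.
Proof.
case=> [[W [T' [cW [VW [WV VW']] ET' [V' [TV' V'T]] ET]]]] [cM iM].
set M := mul (cl_rev T) T in cM iM.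
have EM := center_sc _ cM; set m := M set0 in EM.
have m0 : m != 0 by apply: inv_sc_neq0; rewrite -EM.
have EW := center_sc _ cW; set w := W set0 in EW.
set U := cl_scale m^-1 (cl_rev T).
have UT : mul U T = one.
  by rewrite /U mulZl -/M EM /sc scaleA mulVf // scale1.
have TV : mul T (mul V' VW) = one.
  by rewrite ET -mulA [mul T' _]mulA TV' mul1x WV.
have EUV := inv_unique _ _ _ UT TV.
have TU : mul T U = one by rewrite EUV.
exists U; split; first by [].
have [e [ee aT]] : exists e, e * e = 1 /\ alpha T = cl_scale e T.
  have aW : alpha W = W by rewrite EW /sc alphaZ alpha1.
  suff [e [ee aT']] : exists e, e * e = 1 /\ alpha T' = cl_scale e T'.
    by exists e; split => //; rewrite ET alphaM aW aT' mulZr.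
  case: ET' => HT'; [exists 1|exists (-1)]; rewrite ?mulr1 ?mulrNN ?mulr1; split => //;
    apply/ffunP=> A; rewrite !ffunE; case: (boolP (odd #|A|)) => oA;
    rewrite -signr_odd.
  - by rewrite HT' // !mulr0.
  - by rewrite (negbTE oA) expr0.
  - by rewrite oA expr1.
  - by rewrite HT' // !mulr0.
have aU : alpha U = cl_scale e U by rewrite /U alphaZ alpha_rev aT revZ !scaleA mulrC.
move=> X HX; have [aX rX] := grade3_signs _ HX.
apply: signs_grade3.
  rewrite !alphaM aT aU aX !(mulZl, mulZr) !scaleA; congr (cl_scale _ _).
  by rewrite ee mul1r mulrC.
rewrite !revM rX /U revZ revK !(mulZl, mulZr) !scaleA -!mulA.
by congr (cl_scale _ _); ring.
Qed.

Lemma ffun_neq0 x : x != 0 -> exists A, x A != 0.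
Proof.
move=> nx; apply/existsP; apply: contraNT nx => /existsPn H.
by apply/eqP/ffunP=> A; rewrite ffunE; move: (H A); rewrite negbK => /eqP.
Qed.

Lemma one_center : in_center one.
Proof.
move=> A; rewrite ffunE; case: (A =P set0) => [->|_]; first by left.
by rewrite eqxx.
Qed.

Lemma Gamma3_Q T : Gamma eta 3 T -> in_Q eta T.
Proof.
case=> U [[TU UT] HX].
have gX : forall X, in_grade 3 X -> in_grade 3 (mul (mul T X) U) := HX.
have N1 : (-1 : K) != 0 by rewrite oppr_eq0 oner_eq0.
have aUT : mul (alpha U) (alpha T) = one by rewrite -alphaM UT alpha1.
have cZ : forall X, in_grade 3 X -> commutes (mul U (alpha T)) X.
  move=> X hX; have [aX _] := grade3_signs _ hX.
  have [aY _] := grade3_signs _ (gX X hX).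
  have H1 : mul (mul (alpha T) X) (alpha U) = mul (mul T X) U.
    by move: aY; rewrite !alphaM aX !(mulZl, mulZr); apply: scale_inj N1.
  have H1' : mul (alpha T) (mul X (alpha U)) = mul T (mul X U).
    by move: H1; rewrite -!mulA.
  rewrite /commutes -[LHS](mulx1 K 6 eta) -aUT -!mulA.
  rewrite [mul X (mul (alpha U) _)]mulA [mul (alpha T) (mul (mul X _) _)]mulA H1'.
  by rewrite -!mulA mulA UT mul1x.
have EZ := central3 _ cZ; set z := (mul U (alpha T)) set0 in EZ.
have aT : alpha T = cl_scale z T.
  by rewrite -(mul1x K 6 eta (alpha T)) -TU -mulA EZ mul_scr.
have T0 : T != 0.
  apply/eqP=> T0; move: TU; rewrite T0 mul0x => E.
  by move: one_neq0; rewrite -E eqxx.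
have [A TA] := ffun_neq0 _ T0.
have E2 : T = cl_scale (z * z) T.
  by rewrite -{1}(alphaK _ _ T) aT alphaZ aT scaleA.
have zz : z ^+ 2 = 1.
  have := congr1 (fun f : cl => f A) E2; rewrite ffunE => E3.
  apply/eqP; rewrite -subr_eq0; apply/eqP; apply: (mulIf TA).
  by rewrite mulrBl expr2 -E3 mul1r subrr mul0r.
have par : in_even T \/ in_odd T.
  move/eqP: zz; rewrite sqrf_eq1 => /orP[]/eqP zv; [left|right] => B oB;
    have := congr1 (fun f : cl => f B) aT; rewrite !ffunE zv -signr_odd.
  - rewrite oB expr1 mul1r => E; apply: self_neg.
    by rewrite -{1}E mulN1r.
  - rewrite (negbTE oB) expr0 mul1r => E; apply: self_neg.
    by rewrite {1}E mulN1r.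
have cM : forall X, in_grade 3 X -> commutes (mul (cl_rev T) T) X.
  move=> X hX; have [_ rX] := grade3_signs _ hX.
  have [_ rY] := grade3_signs _ (gX X hX).
  have H2 : mul (cl_rev U) (mul X (cl_rev T)) = mul (mul T X) U.
    by move: rY; rewrite !revM rX !(mulZl, mulZr); apply: scale_inj N1.
  rewrite /commutes -[LHS](mulx1 K 6 eta) -UT.
  transitivity (mul (cl_rev T) (mul (mul (mul T X) U) T)); first by rewrite -!mulA.
  by rewrite -H2 -!mulA mulA -revM UT rev1 mul1x.
have EM := central3 _ cM.
split.
  exists one, T; split => //.
  - exact: one_center.
  - by exists one; split; apply: mul1x.
  - by exists U.
  - by rewrite mul1x.
split; first by rewrite EM; apply: sc_center.
exists (mul U (cl_rev U)); split.
  by rewrite -!mulA [mul T (mul U _)]mulA TU mul1x -revM UT rev1.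
by rewrite -!mulA [mul (cl_rev U) (mul (cl_rev T) T)]mulA -revM TU rev1 mul1x.
Qed.

Lemma addE x y A : (x + y) A = x A + y A.
Proof. by rewrite ffunE. Qed.
Lemma scaleE c x A : cl_scale c x A = c * x A.
Proof. by rewrite ffunE. Qed.

Lemma grade_bladek k B : #|B| = k -> in_grade k (blade K B).
Proof.
move=> cB A nA; rewrite ffunE; case: eqP=> // EA.
by move: nA; rewrite EA cB eqxx.
Qed.

Definition I6 : cl := blade K setT.
Definition T0 : cl := one + cl_scale 2 I6.
Definition V0 : cl := one + cl_scale (-2) I6.
Definition kap := coef setT setT.

Lemma I6I6 : mul I6 I6 = sc kap.
Proof. by rewrite /I6 blade_mul symdiffvv. Qed.

Lemma revD x y : cl_rev (x + y) = cl_rev x + cl_rev y.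
Proof. by apply/ffunP=> A; rewrite !ffunE mulrDr. Qed.

Lemma revI6 : cl_rev I6 = cl_scale (-1) I6.
Proof.
apply/ffunP=> A; rewrite !ffunE; case: (A =P setT) => [->|]; last by rewrite !mulr0.
by rewrite cardsT card_ord -signr_odd /= expr1.
Qed.

Lemma revT0 : cl_rev T0 = V0.
Proof.
rewrite /T0 revD rev1 revZ revI6 /V0; apply/ffunP=> A; rewrite !ffunE; ring.
Qed.

Lemma T0V0 : mul T0 V0 = sc (1 - 4%:R * kap).
Proof.
rewrite /T0 /V0 !(mulDl, mulDr) !(mulZl, mulZr, mul1x, mulx1) I6I6.
by apply/ffunP=> A; rewrite !ffunE; ring.
Qed.

Lemma V0T0 : mul V0 T0 = sc (1 - 4%:R * kap).
Proof.
rewrite /T0 /V0 !(mulDl, mulDr) !(mulZl, mulZr, mul1x, mulx1) I6I6.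
by apply/ffunP=> A; rewrite !ffunE; ring.
Qed.

Lemma T0_even : in_even T0.
Proof.
move=> A oA; rewrite !ffunE.
case: (A =P set0) => [E|_]; first by move: oA; rewrite E cards0.
case: (A =P setT) => [E|_]; first by move: oA; rewrite E cardsT card_ord.
by rewrite mulr0 addr0.
Qed.

Lemma T0_Q : 1 - 4%:R * kap != 0 -> in_Q eta T0.
Proof.
move=> d0.
split.
  exists one, T0; split => //.
  - exact: one_center.
  - by exists one; split; apply: mul1x.
  - by left; exact: T0_even.
  - exists (cl_scale (1 - 4%:R * kap)^-1 V0); split.
      by rewrite mulZr T0V0 /sc scaleA mulVf // scale1.
    by rewrite mulZl V0T0 /sc scaleA mulVf // scale1.
  - by rewrite mul1x.
rewrite revT0 V0T0; split; first exact: sc_center.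
by exists (sc (1 - 4%:R * kap)^-1); apply: sc_inv.
Qed.

Lemma T0_notGamma1 : ~ Gamma eta 1 T0.
Proof.
case=> U [[TU UT] H].
set X : cl := blade K [set o 0].
have gX : in_grade 1 X by apply: grade_bladek; rewrite cards1.
have gY := H X gX; set Y := mul (mul T0 X) U in gY.
have E : mul Y T0 = mul T0 X by rewrite /Y -mulA UT mulx1.
move: E; rewrite /T0 mulDr mulDl mulx1 mul1x mulZr mulZl => E.
set A1 := symdiff [set o 0] setT.
have cA1 : #|A1| = 5%N.
  have -> : A1 = [set~ o 0].
    by apply/setP=> j; rewrite /A1 in_symdiff !inE addbT.
  by rewrite cardsC1 card_ord.
have YA1 : Y A1 = 0 by apply: gY; rewrite cA1.
have XA1 : X A1 = 0 by rewrite ffunE; case: eqP => // EA; move: cA1; rewrite EA cards1.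
have XO : X [set o 0] = 1 by rewrite ffunE eqxx.
have S1 : symdiff A1 setT = [set o 0] by rewrite /A1 symdiffKr.
have S2 : symdiff setT A1 = [set o 0] by rewrite symdiffC S1.
have S3 : symdiff [set o 0] setT = A1 by [].
have S4 : symdiff setT [set o 0] = A1 by rewrite symdiffC.
have E1 := congr1 (fun f : cl => f A1) E.
have E2 := congr1 (fun f : cl => f [set o 0]) E.
move: E1 E2; rewrite /= !addE !scaleE /I6 mul_blader mul_bladel mul_blader mul_bladel.
rewrite S1 S2 S3 S4 YA1 XA1 XO add0r !mul0r !mulr0 addr0 mulr1 addr0.
have anti : coef [set o 0] setT = - coef setT [set o 0].
  apply: coef_anti; rewrite cardsT card_ord cards1.
  by rewrite setTI cards1.
rewrite anti => E1 E2.
set c := coef setT [set o 0] in E1.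
have c0 : c != 0 by apply: coef_neq0.
set y := Y [set o 0] in E1 E2.
have : 2%:R * c * (y + 1) = 0.
  transitivity (- (2%:R * (y * - c)) + 2%:R * c); first by ring.
  by rewrite E1 add0r addNr.
have h2c : 2%:R * c != 0 by rewrite mulf_neq0.
move/eqP; rewrite mulf_eq0 (negbTE h2c) /= E2 => /eqP E3.
by move: h2; rewrite -E3 eqxx.
Qed.

End Six.

Lemma final (K : fieldType) (n : nat) (eta : 'I_n -> K) (Hn : n = 6%N)
  (he2 : forall i, eta i ^+ 2 = 1) (h2 : (2%:R : K) != 0) (h3 : (3%:R : K) != 0)
  (h5 : (5%:R : K) != 0) :
  (forall T : cl K n, Gamma eta 3 T <-> in_Q eta T)
  /\ (exists T : cl K n, ~ (Gamma eta 1 T <-> Gamma eta 3 T))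
  /\ (let T := cl_one K n + cl_scale 2 (@blade K n setT) in
      Gamma eta 3 T /\ ~ Gamma eta 1 T).
Proof.
subst n.
have he : forall i, eta i != 0.
  by move=> i; apply/eqP=> e0; move: (he2 i); rewrite e0 expr0n => /eqP; rewrite eq_sym oner_eq0.
have kk : kap K eta ^+ 2 = 1.
  rewrite /kap /blade_coef exprMn expr2 sgn_sq2 mul1r -prodrXl.
  by rewrite big1 // => i _; rewrite he2.
have d0 : 1 - 4%:R * kap K eta != 0.
  move/eqP: kk; rewrite sqrf_eq1 => /orP[]/eqP ->.
    have -> : 1 - 4%:R * 1 = - 3%:R :> K by ring.
    by rewrite oppr_eq0.
  by have -> : 1 - 4%:R * -1 = 5%:R :> K by ring.
have G3 : Gamma eta 3 (T0 K) by apply: (Q_Gamma3 _ _ h2); apply: T0_Q.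
have nG1 : ~ Gamma eta 1 (T0 K) by apply: (T0_notGamma1 _ _ he h2).
split; first by move=> T; split; [apply: (Gamma3_Q _ _ he h2) | apply: (Q_Gamma3 _ _ h2)].
split; last by split.
by exists (T0 K) => -[_ H]; apply: nG1; apply: H.
Qed.

Theorem mainTheorem17 :
  (forall (R : realType) (p q : nat) (Hpq : (p + q = 6)%N),
      let eta := @eta_pq R p q in
      (forall T : cl R (p + q), Gamma eta 3 T <-> in_Q eta T)
   /\ (exists T : cl R (p + q), ~ (Gamma eta 1 T <-> Gamma eta 3 T))
   /\ (let T := cl_one R (p + q) + cl_scale 2 (@blade R (p + q) setT) in
       Gamma eta 3 T /\ ~ Gamma eta 1 T))
  /\
  (forall R : realType,
      let eta := @eta_C R 6 in
      (forall T : cl R[i] 6, Gamma eta 3 T <-> in_Q eta T)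
   /\ (exists T : cl R[i] 6, ~ (Gamma eta 1 T <-> Gamma eta 3 T))
   /\ (let T := cl_one R[i] 6 + cl_scale 2 (@blade R[i] 6 setT) in
       Gamma eta 3 T /\ ~ Gamma eta 1 T)).
Proof.
split.
  move=> R p q Hpq eta; apply: (final _ _ _ Hpq); rewrite ?pnatr_eq0 //.
  by move=> i; rewrite /eta /eta_pq; case: ifP => _; rewrite ?sqrrN expr1n.
move=> R eta; apply: (final _ _ _ (erefl 6%N)); rewrite ?pnatr_eq0 //.
by move=> i; rewrite /eta /eta_C expr1n.
Qed.
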